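(* Let $(L,[\cdot,\cdot],\alpha,\beta)$ be a left BiHom-Lie algebra and let $f:L\to L$ be a linear map with $f\circ\alpha=\alpha\circ f$ and $f\circ\beta=\beta\circ f$. Define two operations on $L$ by $x\star y=[f(x),y]$ and $x\star' y=[x,f(y)]$ for all $x,y\in L$. Then: (i) $(L,\star,\alpha,\beta)$ is a BiHom-Novikov algebra if and only if for all $x,y,z\in L$: $f([f(\beta(x)),\alpha(y)]+[\beta(x),f(\alpha(y))])-[f(\beta(x)),f(\alpha(y))]\in Z_l(\beta(L))$ and $[f([f(x),\beta(y)]),\alpha\beta(z)]=[f([f(x),\beta(z)]),\alpha\beta(y)]$. (ii) If $\alpha$ and $\beta$ are bijective, then $(L,\star',\alpha,\beta)$ is a BiHom-Novikov algebra if and only if for all $x,y,z\in L$: $[[\beta(x),f(\alpha(y))]+[f(\beta(x)),\alpha(y)],f(\beta(z))]-[\alpha\beta(x),f([\alpha(y),f(z)])]+[\alpha\beta(y),f([\alpha(x),f(z)])]=0$ and $[f(\beta(x)),f(\alpha(y))]\in Z_r(\alpha(L))$.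
   Context: Work over a field. A left BiHom-Lie algebra is a 4-tuple $(L,[\cdot,\cdot],\alpha,\beta)$ with $[\cdot,\cdot]$ bilinear and $\alpha,\beta:L\to L$ linear such that $\alpha\beta=\beta\alpha$, $\alpha([x,y])=[\alpha(x),\alpha(y)]$, $\beta([x,y])=[\beta(x),\beta(y)]$, $[\alpha\beta(x),[y,z]]=[[\beta(x),y],\beta(z)]+[\beta(y),[\alpha(x),z]]$ and $[\beta(x),\alpha(y)]=-[\beta(y),\alpha(x)]$ for all $x,y,z$. Let $Z_l(\beta(L))=\{x\in L: [x,\beta(y)]=0\ \forall y\in L\}$ and $Z_r(\alpha(L))=\{x\in L:[\alpha(y),x]=0\ \forall y\in L\}$. A BiHom-Novikov algebra is a 4-tuple $(A,\mu,\alpha,\beta)$ with $\mu:A\otimes A\to A$ (written $x\cdot y$) and commuting linear maps $\alpha,\beta$ such that for all $x,y,z$: $\alpha(x\cdot y)=\alpha(x)\cdot\alpha(y)$, $\beta(x\cdot y)=\beta(x)\cdot\beta(y)$, $(\beta(x)\cdot\alpha(y))\cdot\beta(z)-\alpha\beta(x)\cdot(\alpha(y)\cdot z)=(\beta(y)\cdot\alpha(x))\cdot\beta(z)-\alpha\beta(y)\cdot(\alpha(x)\cdot z)$, and $(x\cdot\beta(y))\cdot\alpha\beta(z)=(x\cdot\beta(z))\cdot\alpha\beta(y)$. *)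

(* Defs.v *)
From HB Require Import structures.
From mathcomp Require Import all_boot all_algebra.
Set Implicit Arguments. Unset Strict Implicit. Unset Printing Implicit Defensive.
Import GRing.Theory.
Local Open Scope ring_scope.

Section BiHom.
Variables (K : fieldType) (L : lmodType K).

Definition lin_map (f : L -> L) : Prop :=
  forall (a : K) (x y : L), f (a *: x + y) = a *: f x + f y.

Definition bilin_map (m : L -> L -> L) : Prop :=
  (forall (a : K) (x y z : L), m (a *: x + y) z = a *: m x z + m y z) /\
  (forall (a : K) (x y z : L), m z (a *: x + y) = a *: m z x + m z y).

Definition is_left_BiHomLie (br : L -> L -> L) (al be : L -> L) : Prop :=
  bilin_map br /\ lin_map al /\ lin_map be /\
      (forall x, al (be x) = be (al x)) /\
      (forall x y, al (br x y) = br (al x) (al y)) /\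
      (forall x y, be (br x y) = br (be x) (be y)) /\
      (forall x y z, br (al (be x)) (br y z)
                     = br (br (be x) y) (be z) + br (be y) (br (al x) z)) /\
    (forall x y, br (be x) (al y) = - br (be y) (al x)).

Definition is_BiHomNovikov (mu : L -> L -> L) (al be : L -> L) : Prop :=
  bilin_map mu /\ lin_map al /\ lin_map be /\
      (forall x, al (be x) = be (al x)) /\
      (forall x y, al (mu x y) = mu (al x) (al y)) /\
      (forall x y, be (mu x y) = mu (be x) (be y)) /\
      (forall x y z, mu (mu (be x) (al y)) (be z) - mu (al (be x)) (mu (al y) z)
                     = mu (mu (be y) (al x)) (be z) - mu (al (be y)) (mu (al x) z)) /\
    (forall x y z, mu (mu x (be y)) (al (be z)) = mu (mu x (be z)) (al (be y))).

Definition in_Zl (br : L -> L -> L) (be : L -> L) (x : L) : Prop :=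
  forall y, br x (be y) = 0.
Definition in_Zr (br : L -> L -> L) (al : L -> L) (x : L) : Prop :=
  forall y, br (al y) x = 0.

End BiHom.

(* Main.v *)
Require Import Defs.
From HB Require Import structures.
From mathcomp Require Import all_boot all_algebra.
Import GRing.Theory.
Local Open Scope ring_scope.
Set Warnings "-notation-overridden -ambiguous-paths".

Lemma g1 (V : zmodType) (A C D A' : V) : A - (C + D) - (A' - D) = A - A' - C.
Proof. by rewrite opprD opprB addrA addrA addrNK addrAC. Qed.

Lemma g2 (V : zmodType) (P Q R S : V) : (P - Q) - (- R - S) = P + R - Q + S.
Proof. by rewrite opprD !opprK addrA (addrAC P). Qed.

Theorem proposition2p12 (K : fieldType) (L : lmodType K)
  (br : L -> L -> L) (al be f : L -> L) :
  is_left_BiHomLie br al be ->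
  lin_map f ->
  (forall x, f (al x) = al (f x)) ->
  (forall x, f (be x) = be (f x)) ->
  (* (i) *)
  (is_BiHomNovikov (fun x y => br (f x) y) al be <->
   ((forall x y, in_Zl br be
        (f (br (f (be x)) (al y) + br (be x) (f (al y))) - br (f (be x)) (f (al y)))) /\
    (forall x y z, br (f (br (f x) (be y))) (al (be z))
                   = br (f (br (f x) (be z))) (al (be y))))) /\
  (* (ii) *)
  (bijective al -> bijective be ->
   (is_BiHomNovikov (fun x y => br x (f y)) al be <->
    ((forall x y z,
        br (br (be x) (f (al y)) + br (f (be x)) (al y)) (f (be z))
        - br (al (be x)) (f (br (al y) (f z)))
        + br (al (be y)) (f (br (al x) (f z))) = 0) /\
     (forall x y, in_Zr br al (br (f (be x)) (f (al y))))))).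
Proof.
move=> [[brl brr] [all [bel [albe [alm [bem [hj sk]]]]]]] fl fal fbe.
have fD x y : f (x + y) = f x + f y by have := fl 1 x y; rewrite !scale1r.
have f0 : f 0 = 0 by apply: (addrI (f 0)); rewrite -fD !addr0.
have fN x : f (- x) = - f x by have := fl (-1) x 0; rewrite addr0 f0 addr0 !scaleN1r.
have fB x y : f (x - y) = f x - f y by rewrite fD fN.
have brDl x y z : br (x + y) z = br x z + br y z by have := brl 1 x y z; rewrite !scale1r.
have brDr x y z : br z (x + y) = br z x + br z y by have := brr 1 x y z; rewrite !scale1r.
have br0l z : br 0 z = 0 by apply: (addrI (br 0 z)); rewrite -brDl !addr0.
have br0r z : br z 0 = 0 by apply: (addrI (br z 0)); rewrite -brDr !addr0.
have brNl x z : br (- x) z = - br x z by have := brl (-1) x 0 z; rewrite addr0 br0l addr0 !scaleN1r.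
have brNr x z : br z (- x) = - br z x by have := brr (-1) x 0 z; rewrite addr0 br0r addr0 !scaleN1r.
have brBl x y z : br (x - y) z = br x z - br y z by rewrite brDl brNl.
have brBr x y z : br z (x - y) = br z x - br z y by rewrite brDr brNr.
split.
-
  have key : forall x y z,
    (br (f (br (f (be x)) (al y))) (be z) - br (f (al (be x))) (br (f (al y)) z))
    - (br (f (br (f (be y)) (al x))) (be z) - br (f (al (be y))) (br (f (al x)) z))
    = br (f (br (f (be x)) (al y) + br (be x) (f (al y))) - br (f (be x)) (f (al y))) (be z).
    move=> x y z.
    have h1 := hj (f x) (f (al y)) z.
    rewrite -fbe -fal -fbe -fal albe in h1.
    have h2 : br (be x) (f (al y)) = - br (f (be y)) (al x) by rewrite fal fbe sk.
    rewrite h2 !albe h1 fD fN brBl brDl brNl; exact: g1.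
  split => [[_ [_ [_ [_ [_ [_ [n1 n2]]]]]]] | [c1 c2]].
    split; last exact: n2.
    move=> x y w; rewrite -key; apply/eqP; rewrite subr_eq0; apply/eqP; exact: n1.
  split; first by split => a x y z /=; rewrite ?fl ?brl ?brr.
  do 3 (split; first done).
  split; first by move=> x y /=; rewrite alm fal.
  split; first by move=> x y /=; rewrite bem fbe.
  split; last exact: c2.
  move=> x y z /=; apply/eqP; rewrite -subr_eq0 key; apply/eqP; exact: c1.
- move=> _ [gb gbK gKb].
  have key2 : forall x y z,
    (br (br (be x) (f (al y))) (f (be z)) - br (al (be x)) (f (br (al y) (f z))))
    - (br (br (be y) (f (al x))) (f (be z)) - br (al (be y)) (f (br (al x) (f z))))
    = br (br (be x) (f (al y)) + br (f (be x)) (al y)) (f (be z))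
        - br (al (be x)) (f (br (al y) (f z)))
        + br (al (be y)) (f (br (al x) (f z))).
    move=> x y z.
    have h : br (be y) (f (al x)) = - br (f (be x)) (al y) by rewrite fal fbe sk.
    rewrite h brNl brDl; exact: g2.
  have key3 : forall x y z,
    br (br (be x) (f (be y))) (f (al (be z))) - br (br (be x) (f (be z))) (f (al (be y)))
    = br (al (be x)) (br (f (be y)) (f (al z))).
    move=> x y z.
    have e1 : br (be x) (f (be z)) = be (br x (f z)) by rewrite bem fbe.
    have e2 : f (al (be y)) = al (f (be y)) by rewrite fal.
    have e3 : al (br x (f z)) = br (al x) (f (al z)) by rewrite alm fal.
    have e4 : f (al (be z)) = be (f (al z)) by rewrite albe fbe.
    rewrite e1 e2 sk e3 e4 (hj x (f (be y)) (f (al z))) opprK //.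
  split => [[_ [_ [_ [_ [_ [_ [n1 n2]]]]]]] | [c1 c2]].
    split.
      move=> x y z; rewrite -key2; apply/eqP; rewrite subr_eq0; apply/eqP; exact: n1.
    move=> x y w; rewrite -[w]gKb -key3; apply/eqP; rewrite subr_eq0; apply/eqP; exact: n2.
  split; first by split => a x y z /=; rewrite ?fl ?brl ?brr.
  do 3 (split; first done).
  split; first by move=> x y /=; rewrite alm fal.
  split; first by move=> x y /=; rewrite bem fbe.
  split.
    move=> x y z /=; apply/eqP; rewrite -subr_eq0 key2; apply/eqP; exact: c1.
  move=> x y z /=; rewrite -[x]gKb; apply/eqP; rewrite -subr_eq0 key3; apply/eqP; exact: c2.
Qed.
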